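(* Let $M$ be a Mealy machine and let $A$ be an NFA over $I_M$. Let $s,t\in S_M$ and $a,b\in S_A$, and suppose that $\mathcal{L}_A(b)\subseteq \mathcal{L}_A(a)$ and that $(s,a)\nsim (t,b)$. Then there exists a word $\alpha\in \mathcal{L}_A(b)$ such that $\alpha$ witnesses $(s,a)\nsim(t,b)$ (i.e. $\alpha\in\mathcal{L}_A(a)\cap\mathcal{L}_A(b)$ and $\lambda_M(s,\alpha)\neq\lambda_M(t,\alpha)$) and $|\alpha|\leq |S_M|\,|S_A|$.
   Context: A Mealy machine is $M=(I_M,O_M,S_M,\delta_M,\lambda_M,r_M)$ with finite input/output alphabets $I_M,O_M$, finite state set $S_M$, next-state function $\delta_M:S_M\times I_M\to S_M$, output function $\lambda_M:S_M\times I_M\to O_M$, initial state $r_M$; $\delta_M,\lambda_M$ are extended to words in the usual way ($\delta_M(s,\epsilon)=s$, $\lambda_M(s,\epsilon)=\epsilon$, $\delta_M(s,\alpha x)=\delta_M(\delta_M(s,\alpha),x)$, $\lambda_M(s,\alpha x)=\lambda_M(s,\alpha)\lambda_M(\delta_M(s,\alpha),x)$). An NFA over an alphabet $\varphi$ is $A=(\varphi,S_A,\Delta_A,r_A)$ with $\Delta_A:S_A\times\varphi\to 2^{S_A}$ extended to words; all states are accepting, so for $s\in S_A$ the language $\mathcal{L}_A(s)$ is the set of words $\alpha$ with $\Delta_A(s,\alpha)\neq\emptyset$ (a prefix-closed set containing $\epsilon$), and $\mathcal{L}_A=\mathcal{L}_A(r_A)$. For pairs (locations) $(s,a),(t,b)\in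 S_M\times S_A$: a word $\alpha$ witnesses $(s,a)\nsim(t,b)$ if $\alpha\in\mathcal{L}_A(a)\cap\mathcal{L}_A(b)$ and $\lambda_M(s,\alpha)\neq\lambda_M(t,\alpha)$; the pairs are incompatible, $(s,a)\nsim(t,b)$, if such a witness exists, and compatible, $(s,a)\sim(t,b)$, otherwise. *)

(* Defs.v *)
From mathcomp Require Import all_boot.
Set Implicit Arguments. Unset Strict Implicit. Unset Printing Implicit Defensive.

Record Mealy := {
  M_I : finType; M_O : finType; M_S : finType;
  M_delta : M_S -> M_I -> M_S;
  M_lambda : M_S -> M_I -> M_O;
  M_r : M_S }.

Fixpoint delta_w (M : Mealy) (s : M_S M) (w : seq (M_I M)) : M_S M :=
  if w is x :: w' then delta_w (M_delta s x) w' else s.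

(* Extended output function: lambda(s, x alpha) = lambda(s,x) lambda(delta(s,x),alpha)
   (equivalent to the paper's right-recursive definition). *)
Fixpoint lambda_w (M : Mealy) (s : M_S M) (w : seq (M_I M)) : seq (M_O M) :=
  if w is x :: w' then M_lambda s x :: lambda_w (M_delta s x) w' else [::].

(* NFA over alphabet Phi; all states accepting. *)
Record NFA (Phi : finType) := {
  A_S : finType;
  A_Delta : A_S -> Phi -> {set A_S};
  A_r : A_S }.

Fixpoint Delta_set (Phi : finType) (A : NFA Phi) (X : {set A_S A}) (w : seq Phi)
  : {set A_S A} :=
  if w is x :: w' then Delta_set (\bigcup_(q in X) A_Delta q x) w' else X.

Definition Delta_w (Phi : finType) (A : NFA Phi) (s : A_S A) (w : seq Phi) :=
  Delta_set [set s] w.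

Definition lang (Phi : finType) (A : NFA Phi) (s : A_S A) : seq Phi -> Prop :=
  fun w => Delta_w s w != set0.

Definition witness (M : Mealy) (A : NFA (M_I M)) (s : M_S M) (a : A_S A)
  (t : M_S M) (b : A_S A) (alpha : seq (M_I M)) : Prop :=
  lang a alpha /\ lang b alpha /\ lambda_w s alpha <> lambda_w t alpha.

Definition incompatible (M : Mealy) (A : NFA (M_I M)) (s : M_S M) (a : A_S A)
  (t : M_S M) (b : A_S A) : Prop :=
  exists alpha, witness s a t b alpha.

(* Main.v *)
Require Import Defs.
From mathcomp Require Import all_boot.
From Stdlib Require Import Classical.
Set Implicit Arguments. Unset Strict Implicit. Unset Printing Implicit Defensive.

Lemma Dmono (Phi : finType) (A : NFA Phi) (X Y : {set A_S A}) w :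
  X \subset Y -> Delta_set X w \subset Delta_set Y w.
Proof.
elim: w X Y => [|x w IH] X Y //= sXY; apply: IH.
apply/subsetP => z /bigcupP [q qX zq]; apply/bigcupP; exists q => //.
exact: (subsetP sXY).
Qed.

Lemma Ddecomp (Phi : finType) (A : NFA Phi) (X : {set A_S A}) w z :
  z \in Delta_set X w -> exists2 q, q \in X & z \in Delta_set [set q] w.
Proof.
elim: w X => [|x w IH] X /=.
  by move=> zX; exists z => //; rewrite set11.
move=> /IH [p /bigcupP [q qX pq] zp]; exists q => //.
rewrite big_set1; apply: (subsetP (Dmono _ _)) zp; by rewrite sub1set.
Qed.

Lemma lang_cons (Phi : finType) (A : NFA Phi) (c : A_S A) x w :
  lang c (x :: w) <-> exists2 c', c' \in A_Delta c x & lang c' w.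
Proof.
rewrite /lang /Delta_w /= big_set1; split.
  case/set0Pn => z /Ddecomp [q qX zq]; exists q => //; apply/set0Pn; by exists z.
move=> [c' cc' /set0Pn [z zc']]; apply/set0Pn; exists z.
apply: (subsetP (Dmono _ _)) zc'; by rewrite sub1set.
Qed.

Lemma lang_nil (Phi : finType) (A : NFA Phi) (c : A_S A) : lang c [::].
Proof. by rewrite /lang /Delta_w /=; apply/set0Pn; exists c; rewrite set11. Qed.

Definition step (M : Mealy) (A : NFA (M_I M)) (R : rel (M_S M * A_S A)) :
  rel (M_S M * A_S A) :=
  fun p q => R p q && [forall x, ((A_Delta p.2 x != set0) ==>
      (M_lambda p.1 x == M_lambda q.1 x)) &&
      [forall c in A_Delta p.2 x, R (M_delta p.1 x, c) (M_delta q.1 x, c)]].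

Fixpoint E (M : Mealy) (A : NFA (M_I M)) k : rel (M_S M * A_S A) :=
  if k is k'.+1 then step (@E M A k') else fun p q => p.2 == q.2.

Definition Sem (M : Mealy) (A : NFA (M_I M)) k (p q : M_S M * A_S A) :=
  p.2 = q.2 /\ forall w, size w <= k -> lang p.2 w -> lambda_w p.1 w = lambda_w q.1 w.

Arguments E {M} A k.
Arguments Sem {M} A k p q.

Lemma E_Sem (M : Mealy) (A : NFA (M_I M)) k p q : E A k p q <-> Sem A k p q.
Proof.
elim: k p q => [|k IH] [s c] [t d] /=.
  split; first by move/eqP => ->; split => // -[|x w].
  by case=> /= ->.
split.
  case/andP => /IH [/= cd Hk] /forallP H; split => // -[|x w] //= sw.
  case/lang_cons => c' cc' lw.
  case/andP: (H x) => /implyP Ho /forallP Hc.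
  have : A_Delta c x != set0 by apply/set0Pn; exists c'.
  move/Ho/eqP => ->; congr cons.
  have := Hc c'; rewrite cc' /= => /IH [_ /= Hw]; exact: Hw.
move=> [/= cd Hs]; apply/andP; split.
  apply/IH; split => // w sw; apply: Hs; exact: leqW.
apply/forallP => x; apply/andP; split.
  apply/implyP => /set0Pn [c' cc'].
  have L : lang c [:: x] by apply/lang_cons; exists c' => //; exact: lang_nil.
  by case: (Hs [:: x] isT L) => ->.
apply/forallP => c'; apply/implyP => cc'; apply/IH; split => // w sw lw /=.
have L : lang c (x :: w) by apply/lang_cons; exists c'.
by case: (Hs (x :: w) sw L).
Qed.

Lemma E_refl (M : Mealy) (A : NFA (M_I M)) k p : E A k p p.
Proof. by apply/E_Sem; split. Qed.
Lemma E_sym (M : Mealy) (A : NFA (M_I M)) k p q : E A k p q -> E A k q p.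
Proof.
move/E_Sem => [e H]; apply/E_Sem; split => // w sw lw; symmetry; apply: H => //.
by rewrite e.
Qed.
Lemma E_trans (M : Mealy) (A : NFA (M_I M)) k p q r :
  E A k p q -> E A k q r -> E A k p r.
Proof.
move/E_Sem => [e H] /E_Sem [e' H']; apply/E_Sem; split; first by rewrite e.
move=> w sw lw; rewrite H // H' //; by rewrite -e.
Qed.
Lemma E_mono (M : Mealy) (A : NFA (M_I M)) k p q : E A k.+1 p q -> E A k p q.
Proof. by case/andP. Qed.

Lemma step_ext (M : Mealy) (A : NFA (M_I M)) (R R' : rel (M_S M * A_S A)) :
  R =2 R' -> step R =2 step R'.
Proof.
move=> H p q; rewrite /step H; congr andb; apply: eq_forallb => x; congr andb.
apply: eq_forallb => c; by rewrite H.
Qed.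

Lemma stable_from (M : Mealy) (A : NFA (M_I M)) k :
  E A k.+1 =2 E A k -> forall m, E A (k + m) =2 E A k.
Proof.
move=> H; elim=> [|m IH]; first by rewrite addn0.
rewrite addnS => p q /=.
rewrite (step_ext IH) -/(E A k.+1 p q); exact: H.
Qed.

Lemma exmin (P : finType) (Q : pred P) x :
  Q x -> exists2 m, Q m & forall q, Q q -> enum_rank m <= enum_rank q.
Proof.
move=> Qx.
have ex : exists n, [exists q, Q q && (nat_of_ord (enum_rank q) == n)].
  by exists (nat_of_ord (enum_rank x)); apply/existsP; exists x; rewrite Qx eqxx.
case: (ex_minnP ex) => n /existsP [m /andP [Qm /eqP mn]] Hmin.
exists m => // q Qq; rewrite mn; apply: Hmin; apply/existsP; exists q.
by rewrite Qq eqxx.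
Qed.

Definition Rset (M : Mealy) (A : NFA (M_I M)) k :=
  [set p | [forall q, E A k p q ==> (enum_rank p <= enum_rank q)]].

Lemma Rset_proper (M : Mealy) (A : NFA (M_I M)) k p0 q0 :
  E A k p0 q0 -> ~~ E A k.+1 p0 q0 -> Rset A k \proper Rset A k.+1.
Proof.
move=> Hk Hk1; apply/properP; split.
  apply/subsetP => p; rewrite !inE => /forallP H; apply/forallP => q.
  apply/implyP => /E_mono; exact: (implyP (H q)).
case: (@exmin _ (E A k p0) p0 (E_refl _ _)) => m Em Hm.
have mR : forall q, E A k m q -> enum_rank m <= enum_rank q.
  move=> q Hq; apply: Hm; exact: E_trans Em Hq.
have [z Emz nE'mz] : exists2 z, E A k m z & ~~ E A k.+1 m z.
  case: (boolP (E A k.+1 m p0)) => H.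
    exists q0; first exact: E_trans (E_sym Em) Hk.
    apply/negP => H'; move/negP: Hk1; apply; exact: E_trans (E_sym H) H'.
  by exists p0 => //; apply: E_sym.
case: (@exmin _ (E A k.+1 z) z (E_refl _ _)) => m' Em' Hm'.
exists m'.
  rewrite inE; apply/forallP => q; apply/implyP => Hq; apply: Hm'.
  exact: E_trans Em' Hq.
rewrite inE; apply/negP => /forallP Hr.
have Emm' : E A k m m' by apply: E_trans Emz (E_mono Em').
have r1 := implyP (Hr m) (E_sym Emm').
have r2 := mR _ Emm'.
have : m = m'.
  apply: enum_rank_inj; apply: val_inj => /=; apply/eqP; by rewrite eqn_leq r1 r2.
move=> eqm; move/negP: nE'mz; apply; rewrite eqm; exact: E_sym.
Qed.

Definition stableb (M : Mealy) (A : NFA (M_I M)) j :=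
  [forall p, forall q, E A j.+1 p q == E A j p q].

Lemma count_R (M : Mealy) (A : NFA (M_I M)) k :
  (forall j, j < k -> ~~ stableb A j) -> k <= #|Rset A k|.
Proof.
elim: k => [|k IH] H //.
have := H k (ltnSn k); rewrite negb_forall => /existsP [p].
rewrite negb_forall => /existsP [q] Hne.
have Hpq : E A k p q && ~~ E A k.+1 p q.
  case: (boolP (E A k.+1 p q)) Hne => H1; first by rewrite (E_mono H1).
  by case: (E A k p q).
case/andP: Hpq => H1 H2.
have := proper_card (Rset_proper H1 H2).
have := IH (fun j jk => H j (ltnW jk)).
move=> a b; exact: leq_ltn_trans a b.
Qed.

Lemma exists_stable (M : Mealy) (A : NFA (M_I M)) :
  exists2 j, j <= #|M_S M| * #|A_S A| & stableb A j.
Proof.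
set N := #|M_S M| * #|A_S A|.
apply: NNPP => Hn.
have : N.+1 <= #|Rset A N.+1|.
  apply: count_R => j jN; apply/negP => Hs; apply: Hn; by exists j.
have : #|Rset A N.+1| <= N by rewrite /N -card_prod; exact: max_card.
move=> a b; have := leq_trans b a; by rewrite ltnn.
Qed.

Theorem theorem1 (M : Mealy) (A : NFA (M_I M)) (s t : M_S M) (a b : A_S A) :
  (forall w, lang b w -> lang a w) ->
  incompatible s a t b ->
  exists alpha, lang b alpha /\ witness s a t b alpha /\
    size alpha <= #|M_S M| * #|A_S A|.
Proof.
move=> Hsub [al [la [lb ne]]].
set N := #|M_S M| * #|A_S A|.
case: (leqP (size al) N) => hs.
  by exists al; split => //; split => //; split.
apply: NNPP => Hn.
have HEN : E A N (s, b) (t, b).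
  apply/E_Sem; split => // w sw lw /=; apply: NNPP => Hne; apply: Hn.
  exists w; split => //; split => //; split => //; exact: Hsub.
case: (exists_stable A) => j jN /forallP Hst.
have Hst' : E A j.+1 =2 E A j by move=> p q; apply/eqP; have := Hst p; move/forallP/(_ q).
have e1 := stable_from Hst' (N - j).
have e2 := stable_from Hst' (size al - j).
rewrite subnKC // in e1.
rewrite subnKC in e2; last exact: leq_trans jN (ltnW hs).
move: HEN; rewrite e1 -e2 => /E_Sem [_ /= H].
by apply: ne; apply: H.
Qed.
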